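(* Let $q=8m+3$ be a prime power ($m\ge1$), and let $I$, $E_0,E_1,E_2,E_3$ be as in the context. Then in $\mathbb{Z}[(\mathbb{F}_{q^2},+)]$, $$E_0E_1^{(-1)}+E_1E_0^{(-1)}+E_2E_3^{(-1)}+E_3E_2^{(-1)}=\sum_{h=0,1}\sum_{i,j\in I}\Big(C_{i+h}^{(8,q^2)}\big(C_{j+2+h}^{(8,q^2)}\big)^{(-1)}+C_{i+2+h}^{(8,q^2)}\big(C_{j+h}^{(8,q^2)}\big)^{(-1)}\Big)+8m(4m+1)\cdot 0_{\mathbb{F}_{q^2}}+m(28m+5)\,\mathbb{F}_{q^2}^\ast.$$
   Context: Let $\omega$ be a primitive element of $\mathbb{F}_{q^2}$, $C_i^{(N,q^2)}=\omega^i\langle\omega^N\rangle$ for $N\mid q^2-1$ (index mod $N$), and $L_i=C_i^{(q+1,q^2)}$ (index mod $q+1$). Let $I\subseteq\{0,1,\dots,7\}$ with $|I|=3$ and $I\cap\{x+4\bmod 8:x\in I\}=\emptyset$; let $y$ be the unique element of $I$ whose parity differs from that of the other two. Let $J_1=\{y+2+4i\bmod (q+1):0\le i\le m-1\}$ and $J_2=\{y+4i\bmod(q+1):0\le i\le m-1\}$. Define $E_0=\bigcup_{i\in I}C_i^{(8,q^2)}\cup\bigcup_{i\in J_1}L_i$, $E_1=\bigcup_{i\in I}C_{i+2}^{(8,q^2)}\cup\bigcup_{i\in J_2}L_i$, $E_2=\bigcup_{i\in I}C_{i+1}^{(8,q^2)}\cup\bigcup_{i\in J_1}L_{i+1}$,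 $E_3=\bigcup_{i\in I}C_{i+3}^{(8,q^2)}\cup\bigcup_{i\in J_2}L_{i+1}$. Subsets are identified with group ring elements $\sum_{x\in X}x$, $X^{(-1)}=\{-x:x\in X\}$, $\mathbb{F}_{q^2}^\ast=\mathbb{F}_{q^2}\setminus\{0\}$, and $0_{\mathbb{F}_{q^2}}$ is the identity of the group ring. *)

(* Defs.v *)
From HB Require Import structures.
From mathcomp Require Import all_boot all_order all_algebra all_field.
Set Implicit Arguments. Unset Strict Implicit. Unset Printing Implicit Defensive.
Import GRing.Theory.
Local Open Scope ring_scope.

(* Cyclotomic class w^i <w^N> in a finite field F, where w is a primitive
   element (generator of F^*, of order #|F|-1).  Since w^N generates the
   subgroup <w^N>, k ranging over 0..#|F|-2 covers all of it.  The index i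
   is a nat; i is effectively taken mod N because N | #|F|-1. *)
Definition cyc (F : finFieldType) (w : F) (N i : nat) : {set F} :=
  [set w ^+ (i + N * k)%N | k : 'I_(#|F|.-1)].

(* Group ring Z[(F,+)]: an element is its coefficient function F -> int.
   For subsets A, B, the product A * B^(-1) has coefficient at z equal to
   #{(x,y) in A x B | x - y = z}. *)
Definition grmulinv (F : finFieldType) (A B : {set F}) (z : F) : int :=
  (\sum_(x in A) \sum_(y in B) nat_of_bool (x - y == z)%R)%N%:Z.

Definition E0 (F : finFieldType) (w : F) (q m y : nat) (I : {set 'I_8}) : {set F} :=
  (\bigcup_(i in I) cyc w 8 i) :|: \bigcup_(i < m) cyc w q.+1 ((y + 2 + 4 * i) %% q.+1).
Definition E1 (F : finFieldType) (w : F) (q m y : nat) (I : {set 'I_8}) : {set F} :=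
  (\bigcup_(i in I) cyc w 8 (i + 2)) :|: \bigcup_(i < m) cyc w q.+1 ((y + 4 * i) %% q.+1).
Definition E2 (F : finFieldType) (w : F) (q m y : nat) (I : {set 'I_8}) : {set F} :=
  (\bigcup_(i in I) cyc w 8 (i + 1)) :|: \bigcup_(i < m) cyc w q.+1 ((y + 2 + 4 * i) %% q.+1 + 1).
Definition E3 (F : finFieldType) (w : F) (q m y : nat) (I : {set 'I_8}) : {set F} :=
  (\bigcup_(i in I) cyc w 8 (i + 3)) :|: \bigcup_(i < m) cyc w q.+1 ((y + 4 * i) %% q.+1 + 1).

(* Main.v *)
Require Import Defs.
From HB Require Import structures.
From mathcomp Require Import all_boot all_order all_algebra all_field zify ring.
Import GRing.Theory.
Local Open Scope ring_scope.

Definition ind (F : finFieldType) (A : {set F}) (x : F) : int := Posz (x \in A).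
Definition nzf (F : finFieldType) (x : F) : int := Posz (x != 0).
Definition cv (F : finFieldType) (f g : F -> int) (z : F) : int :=
  \sum_(y : F) f (z + y) * g y.

Arguments ind {F} A x.
Arguments nzf {F} x.
Arguments cv {F} f g z.

Section CV.
Variable F : finFieldType.
Implicit Types (f g : F -> int) (z : F).

Lemma cv_ext f f' g g' z : (forall x, f x = f' x) -> (forall x, g x = g' x) ->
  cv f g z = cv f' g' z.
Proof. by move=> hf hg; apply: eq_bigr => y _; rewrite hf hg. Qed.

Lemma cvDl f1 f2 g z : cv (fun x => f1 x + f2 x) g z = cv f1 g z + cv f2 g z.
Proof. by rewrite /cv -big_split; apply: eq_bigr => y _; rewrite mulrDl. Qed.

Lemma cvDr f g1 g2 z : cv f (fun x => g1 x + g2 x) z = cv f g1 z + cv f g2 z.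
Proof. by rewrite /cv -big_split; apply: eq_bigr => y _; rewrite mulrDr. Qed.

Lemma cvBl f1 f2 g z : cv (fun x => f1 x - f2 x) g z = cv f1 g z - cv f2 g z.
Proof. by rewrite /cv -sumrB; apply: eq_bigr => y _; rewrite mulrBl. Qed.

Lemma cv_suml (J : Type) (r : seq J) (P : pred J) (h : J -> F -> int) g z :
  cv (fun x => \sum_(i <- r | P i) h i x) g z = \sum_(i <- r | P i) cv (h i) g z.
Proof.
rewrite /cv (eq_bigr (fun y => \sum_(i <- r | P i) h i (z + y) * g y)).
  by rewrite exchange_big.
by move=> y _; rewrite mulr_suml.
Qed.

Lemma cv_sumr (J : Type) (r : seq J) (P : pred J) f (h : J -> F -> int) z :
  cv f (fun x => \sum_(i <- r | P i) h i x) z = \sum_(i <- r | P i) cv f (h i) z.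
Proof.
rewrite /cv (eq_bigr (fun y => \sum_(i <- r | P i) f (z + y) * h i y)).
  by rewrite exchange_big.
by move=> y _; rewrite mulr_sumr.
Qed.

Lemma cv_swap f g z : (forall t, g (- t) = g t) ->
  cv g f z = cv (fun x => f (- x)) g z.
Proof.
move=> gs; rewrite /cv.
have inj : injective (fun y : F => - y - z).
  by move=> a b /addIr /oppr_inj.
rewrite (reindex_inj inj) /=; apply: eq_bigr => y _.
have e1 : z + (- y - z) = - y by rewrite addrC subrK.
have e2 : - y - z = - (z + y) by rewrite opprD addrC.
by rewrite e1 e2 gs mulrC.
Qed.
End CV.
Local Close Scope ring_scope.
Definition okI (bs : seq bool) (y : nat) : bool :=
  let c k := nth false bs k in
  (count id bs == 3) ==>
  all (fun x => c x ==> ~~ c ((x + 4) %% 8)) (iota 0 8) ==>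
  c y ==>
  all (fun x => c x ==> (x != y) ==> (odd x != odd y)) (iota 0 8) ==>
  all (fun r => (c r + c ((r + 4) %% 8) + (r %% 4 == (y + 2) %% 4) == 1)%N) (iota 0 8).

Lemma okI_all : forall b0 b1 b2 b3 b4 b5 b6 b7 : bool,
  all (okI [:: b0; b1; b2; b3; b4; b5; b6; b7]) (iota 0 8).
Proof. by do 8!case; vm_compute. Qed.

Lemma Ifact (I : {set 'I_8}) (y : 'I_8) : #|I| = 3 ->
  (forall x : 'I_8, x \in I -> (inord ((x + 4) %% 8) : 'I_8) \notin I) ->
  y \in I -> (forall x : 'I_8, x \in I -> x != y -> odd x != odd y) ->
  forall r : nat, (r < 8)%N ->
  ((inord r : 'I_8) \in I) + ((inord ((r + 4) %% 8) : 'I_8) \in I) + (r %% 4 == (y + 2) %% 4) = 1.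
Proof.
move=> cI H4 yI Hpar.
pose bs := [seq (inord k : 'I_8) \in I | k <- iota 0 8].
have cE : forall k, (k < 8)%N -> nth false bs k = ((inord k : 'I_8) \in I).
  by move=> k hk; rewrite (nth_map 0) ?size_iota // nth_iota.
have : okI bs y.
  have := okI_all (nth false bs 0) (nth false bs 1) (nth false bs 2) (nth false bs 3)
    (nth false bs 4) (nth false bs 5) (nth false bs 6) (nth false bs 7).
  have -> : [:: nth false bs 0; nth false bs 1; nth false bs 2; nth false bs 3;
    nth false bs 4; nth false bs 5; nth false bs 6; nth false bs 7] = bs by [].
  by move/allP; apply; rewrite mem_iota /=.
rewrite /okI.
have -> : count id bs = #|I|.
  rewrite count_map -sum1_card.
  rewrite (eq_bigl (fun i : 'I_8 => (inord (val i) : 'I_8) \in I)); last by move=> i; rewrite inord_val.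
  by rewrite -(big_mkord (fun k => (inord k : 'I_8) \in I) (fun _ => 1%N)) sum1_count.
have h2 : all (fun x => nth false bs x ==> ~~ nth false bs ((x + 4) %% 8)) (iota 0 8).
  apply/allP => x; rewrite mem_iota /= => hx; rewrite !cE //; last by rewrite ltn_pmod.
  apply/implyP => /(H4 (inord x)); rewrite inordK //.
have h3 : nth false bs y by rewrite cE // inord_val.
have h4 : all (fun x => nth false bs x ==> (x != y) ==> (odd x != odd y)) (iota 0 8).
  apply/allP => x; rewrite mem_iota /= => hx; rewrite cE //.
  apply/implyP => /Hpar h; apply/implyP => xy; have := h.
  rewrite inordK //; apply; apply: contra xy => /eqP <-; rewrite inordK ?eqxx //.
rewrite cI eqxx h2 h3 h4 => /implyP/(_ isT)/implyP/(_ isT)/implyP/(_ isT)/implyP/(_ isT)/allP H r hr; have := H r; rewrite mem_iota /= => /(_ hr) /eqP.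
by rewrite !cE // ltn_pmod.
Qed.

Local Open Scope ring_scope.
Lemma sum_ord_const (r : nat) (c : int) : \sum_(i < r) c = r%:Z * c.
Proof.
elim: r => [|r IH]; first by rewrite big_ord0 mul0r.
by rewrite big_ord_recr /= IH -[r.+1]addn1 PoszD mulrDl mul1r.
Qed.

Section CV2.
Variable F : finFieldType.
Implicit Types (f g : F -> int) (z : F).

Lemma cv_nz g z : cv nzf g z = \sum_(y : F) g y - g (- z).
Proof.
rewrite /cv (bigD1 (- z)) //= [X in _ = X - _](bigD1 (- z)) //= addrN /nzf eqxx mul0r add0r.
rewrite (addrC (g (- z))) addrK; apply: eq_bigr => y hy.
rewrite (_ : z + y != 0) ?mul1r //; apply: contra hy; rewrite addrC addr_eq0; exact: id.
Qed.

Lemma sum_ind (A : {set F}) : \sum_(y : F) ind A y = #|A|%:Z.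
Proof.
rewrite -sum1_card (big_mkcond (fun y => y \in A)) /= (big_morph Posz PoszD (erefl _)).
by apply: eq_bigr => y _; rewrite /ind; case: (y \in A).
Qed.

Lemma ind_U (A B : {set F}) x : (x \in A -> x \in B -> False) ->
  ind (A :|: B) x = ind A x + ind B x.
Proof.
rewrite /ind inE; case: (x \in A); case: (x \in B) => //= h; exfalso; exact: h.
Qed.

Lemma ind_bigcup (J : finType) (P : pred J) (S : J -> {set F}) x :
  (forall i j, P i -> P j -> i != j -> x \in S i -> x \in S j -> False) ->
  ind (\bigcup_(i | P i) S i) x = \sum_(i | P i) ind (S i) x.
Proof.
move=> H; case: (boolP (x \in \bigcup_(i | P i) S i)) => h.
  move/bigcupP: (h) => [i Pi xi]; rewrite [RHS](bigD1 i) //= [X in _ + X]big1 ?addr0.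
    by rewrite /ind h xi.
  move=> j /andP [Pj ji]; rewrite /ind; case: (boolP (x \in S j)) => // xj.
  by exfalso; apply: (H i j) => //; rewrite eq_sym.
rewrite /ind (negbTE h) [RHS]big1 // => i Pi; case: (boolP (x \in S i)) => // xi.
by case/negP: h; apply/bigcupP; exists i.
Qed.

Lemma grmulinvE (A B : {set F}) z : grmulinv A B z = cv (ind A) (ind B) z.
Proof.
rewrite /grmulinv /cv exchange_big /= (big_morph Posz PoszD (erefl _)).
rewrite [RHS](bigID (fun y => y \in B)) /= [X in _ = _ + X]big1 ?addr0; last first.
  by move=> y /negbTE yB; rewrite /ind yB mulr0.
apply: eq_bigr => y yB; rewrite /ind yB mulr1; congr Posz.
rewrite (eq_bigr (fun x => nat_of_bool (x == z + y))); last by move=> x _; rewrite subr_eq.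
case: (boolP (z + y \in A)) => h.
  by rewrite (bigD1 (z + y)) //= eqxx big1 ?addn0 // => x /andP [_ /negbTE ->].
by rewrite big1 // => x xA; case: eqP => // e; case/negP: h; rewrite -e.
Qed.
End CV2.

Local Close Scope ring_scope.
Lemma sum_delta (I : {set 'I_8}) (j : 'I_8) : (\sum_(i in I) (i == j) = (j \in I))%N.
Proof.
case: (boolP (j \in I)) => h.
  by rewrite (bigD1 j) //= eqxx big1 ?addn0 // => i /andP [_ /negbTE ->].
by rewrite big1 // => i iI; case: eqP => // e; case/negP: h; rewrite -e.
Qed.

Lemma Ifact2 (I : {set 'I_8}) (y : 'I_8) : #|I| = 3 ->
  (forall x : 'I_8, x \in I -> (inord ((x + 4) %% 8) : 'I_8) \notin I) ->
  y \in I -> (forall x : 'I_8, x \in I -> x != y -> odd x != odd y) ->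
  forall a s : nat,
  (\sum_(i in I) (a %% 8 == (i + s) %% 8) + \sum_(i in I) ((a + 4) %% 8 == (i + s) %% 8)
   + (a %% 4 == (y + 2 + s) %% 4))%N = 1%N.
Proof.
move=> h1 h2 h3 h4 a s.
set r := ((a + 7 * s) %% 8)%N.
have r8 : (r < 8)%N by rewrite ltn_pmod.
have r48 : ((r + 4) %% 8 < 8)%N by rewrite ltn_pmod.
rewrite (eq_bigr (fun i => nat_of_bool (i == (inord r : 'I_8)))); last first.
  move=> i _; congr nat_of_bool; rewrite -val_eqE /= inordK //; have := ltn_ord i; rewrite /r.
  by move: (nat_of_ord i) => k hk; apply/eqP/eqP; lia.
rewrite [X in (_ + X + _)%N](eq_bigr (fun i => nat_of_bool (i == (inord ((r + 4) %% 8) : 'I_8)))); last first.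
  move=> i _; congr nat_of_bool; rewrite -val_eqE /= inordK //; have := ltn_ord i; rewrite /r.
  by move: (nat_of_ord i) => k hk; apply/eqP/eqP; lia.
rewrite !sum_delta.
have -> : (a %% 4 == (y + 2 + s) %% 4) = (r %% 4 == (y + 2) %% 4).
  by rewrite /r; apply/eqP/eqP; lia.
exact: Ifact.
Qed.

Lemma Ifact3 (I : {set 'I_8}) (y : 'I_8) : #|I| = 3 ->
  (forall x : 'I_8, x \in I -> (inord ((x + 4) %% 8) : 'I_8) \notin I) ->
  y \in I -> (forall x : 'I_8, x \in I -> x != y -> odd x != odd y) ->
  forall i : 'I_8, i \in I -> (i %% 4 != (y + 2) %% 4)%N.
Proof.
move=> h1 h2 h3 h4 i iI; have := @Ifact I y h1 h2 h3 h4 i (ltn_ord i).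
by rewrite inord_val iI; case: (_ \in _); case: (_ == _).
Qed.

Lemma arith_d (a' c M : nat) : (a' < 4 * M)%N -> (c < 4)%N ->
  (\sum_(i < M) (a' == c + 4 * i) = (a' %% 4 == c))%N.
Proof.
move=> ha hc; case: (boolP (a' %% 4 == c)) => h.
  have i0 : (a' %/ 4 < M)%N by lia.
  rewrite (bigD1 (Ordinal i0)) //= big1 ?addn0.
    by have -> : a' == c + 4 * (a' %/ 4) by apply/eqP; move/eqP: h; lia.
  move=> i ni; case: eqP => // e; case/eqP: ni; apply: val_inj => /=; lia.
rewrite big1 // => i _; case: eqP => // e; case/negP: h; apply/eqP; lia.
Qed.
Local Open Scope ring_scope.
Section S.
Variables (F : finFieldType) (w : F) (q m : nat).
Hypothesis Hm : (1 <= m)%N.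
Hypothesis Hq : q = (8 * m + 3)%N.
Hypothesis HF : #|F| = (q ^ 2)%N.
Hypothesis Hw : (#|F|.-1).-primitive_root w.
Hypothesis Hc : [pchar F].-nat q.

Local Notation n := (#|F|.-1).

Lemma n_eq : n = ((q - 1) * q.+1)%N.
Proof. rewrite HF Hq; nia. Qed.

Lemma n_gt0 : (0 < n)%N.
Proof. rewrite n_eq Hq; nia. Qed.

Lemma w_neq0 a : w ^+ a != 0.
Proof.
apply: expf_neq0; apply/negP=> /eqP w0.
have := prim_expr_order Hw; rewrite w0 expr0n.
rewrite -(prednK n_gt0) /=.
by move/eqP; rewrite eq_sym oner_eq0.
Qed.

Lemma logP x : x != 0 -> exists a, x = w ^+ a.
Proof.
move=> x0.
have h : x ^+ n = 1.
  apply: (mulfI x0); rewrite -exprS mulr1.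
  by move: (expf_card x); rewrite -(prednK (ltnW (finNzRing_gt1 F))).
by have [i ->] := prim_rootP Hw h; exists i.
Qed.

Lemma expw_eq a b : (w ^+ a == w ^+ b) = (a == b %[mod n]).
Proof. exact: eq_prim_root_expr. Qed.

Lemma mem_cyc N i a : (0 < N)%N -> (N %| n)%N ->
  (w ^+ a \in cyc w N i) = (a %% N == i %% N)%N.
Proof.
move=> N0 Nn; apply/imsetP/idP.
  case=> k _ /eqP; rewrite expw_eq => /eqP H.
  apply/eqP; rewrite -(modn_dvdm a Nn) H (modn_dvdm _ Nn).
  by rewrite addnC mulnC modnMDl.
move=> /eqP H.
set d := (n %/ N)%N.
have nd : n = (N * d)%N by rewrite /d mulnC divnK.
have d0 : (0 < d)%N by move: n_gt0; rewrite nd; case: (d); rewrite ?muln0.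
have Hni : (n * i %% N = 0)%N by apply/eqP; exact: dvdn_mulr.
have Ha : ((a + n * i) %% N = i %% N)%N by rewrite -modnDmr Hni addn0.
have Hia : (i <= a + n * i)%N by rewrite addnC; apply: leq_trans (leq_pmull i n_gt0) (leq_addr _ _).
have /dvdnP [t Ht] : (N %| a + n * i - i)%N.
  by rewrite -eqn_mod_dvd // Ha.
have Ht2 := divn_eq t d.
have kn : (t %% d < n)%N.
  by apply: (leq_trans (ltn_pmod t d0)); rewrite nd leq_pmull.
exists (Ordinal kn) => //=.
have E1 : (a + n * i = i + t * N)%N by rewrite -Ht subnKC.
have P : (t * N = (t %/ d) * n + N * (t %% d))%N by rewrite {1}Ht2 nd; ring.
have E : (i * n + a = (t %/ d) * n + (i + N * (t %% d)))%N by rewrite mulnC addnC E1 P addnCA.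
by apply/eqP; rewrite expw_eq -(modnMDl i a) E modnMDl.
Qed.


Lemma expw_mod a : w ^+ a = w ^+ (a %% n).
Proof. by apply/eqP; rewrite expw_eq modn_mod. Qed.

Lemma cyc0 N i : (0 : F) \notin cyc w N i.
Proof. by apply/imsetP => -[k _ /esym /eqP]; rewrite (negbTE (w_neq0 _)). Qed.

Lemma cyc_eq N i j : (0 < N)%N -> (N %| n)%N -> (i %% N = j %% N)%N ->
  cyc w N i = cyc w N j.
Proof.
move=> N0 Nn E; apply/setP => x.
have [->|x0] := eqVneq x 0; first by rewrite !(negbTE (cyc0 _ _)).
by have [a ->] := logP _ x0; rewrite !mem_cyc // E.
Qed.

Lemma cyc_disj N M d i j x : (0 < N)%N -> (N %| n)%N -> (0 < M)%N -> (M %| n)%N ->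
  (d %| N)%N -> (d %| M)%N -> (i %% d != j %% d)%N ->
  x \in cyc w N i -> x \in cyc w M j -> False.
Proof.
move=> N0 Nn M0 Mn dN dM ij.
have [->|x0] := eqVneq x 0; first by rewrite (negbTE (cyc0 _ _)).
have [a ->] := logP _ x0; rewrite !mem_cyc // => /eqP h1 /eqP h2.
move/negP: ij; apply; apply/eqP.
by rewrite -(modn_dvdm i dN) -h1 (modn_dvdm _ dN) -(modn_dvdm j dM) -h2 (modn_dvdm _ dM).
Qed.

Lemma card_cyc N i : (0 < N)%N -> (N %| n)%N -> #|cyc w N i| = (n %/ N)%N.
Proof.
move=> N0 Nn; set d := (n %/ N)%N.
have nd : n = (N * d)%N by rewrite /d mulnC divnK.
pose g (k : 'I_d) := w ^+ (i + N * k).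
have ginj : injective g.
  move=> k k' /eqP; rewrite /g expw_eq eqn_modDl nd -!muln_modr => /eqP.
  by move/eqP; rewrite eqn_pmul2l // !modn_small // => /eqP /val_inj.
suff -> : cyc w N i = g @: setT by rewrite card_imset // cardsT card_ord.
apply/setP => x; apply/idP/imsetP.
  case/imsetP => k _ ->.
  have d0 : (0 < d)%N by move: n_gt0; rewrite nd; case: (d); rewrite ?muln0.
  exists (Ordinal (ltn_pmod k d0)) => //.
  rewrite /g /=; apply/eqP; rewrite expw_eq eqn_modDl.
  have : (N * k == N * (k %% d) %[mod N * d])%N by rewrite -!muln_modr modn_mod.
  by rewrite -nd.
by case=> k _ ->; rewrite /g mem_cyc // addnC mulnC modnMDl.
Qed.

Definition nh := ((4 * m + 1) * (8 * m + 4))%N.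
Lemma n_nh : n = (2 * nh)%N.
Proof. rewrite n_eq Hq /nh; nia. Qed.

Lemma w_nh : w ^+ nh = -1.
Proof.
have : (w ^+ nh) ^+ 2 == 1 by rewrite -exprM mulnC -n_nh prim_expr_order.
have nh1 : w ^+ nh != w ^+ 0.
  rewrite expw_eq mod0n modn_small; first by rewrite /nh; case: m Hm.
  by rewrite n_nh; move: Hm; rewrite /nh; nia.
rewrite expr0 in nh1.
by rewrite sqrf_eq1 (negbTE nh1) /= => /eqP.
Qed.

Lemma neg_w a : - w ^+ a = w ^+ (a + nh).
Proof. by rewrite exprD w_nh mulrN1. Qed.


Local Notation Q := q.+1.
Local Notation L j := (cyc w q.+1 j).
Definition K := [set x : F | x ^+ q == x].

Lemma Qn : (Q %| n)%N. Proof. by rewrite n_eq dvdn_mull. Qed.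
Lemma q_gt0 : (0 < q)%N. Proof. by rewrite Hq addn3. Qed.

Lemma K_L0 x : x != 0 -> (x \in K) = (x \in L 0).
Proof.
move=> x0; have [a ->] := logP _ x0.
rewrite inE mem_cyc // ?Qn // -exprM mulnC expw_eq mod0n.
rewrite eqn_mod_dvd; last by rewrite leq_pmull // q_gt0.
rewrite -{2}(mul1n a) -mulnBl n_eq dvdn_pmul2l //.
by rewrite Hq addn3.
Qed.

Lemma K0 : (0 : F) \in K.
Proof. by rewrite inE expr0n eqn0Ngt q_gt0. Qed.

Lemma K_sub x y : x \in K -> y \in K -> x - y \in K.
Proof.
rewrite !inE => /eqP hx /eqP hy.
by rewrite exprDn_pchar // exprNn_pchar // hx hy.
Qed.

Lemma K_opp x : x \in K -> - x \in K.
Proof. by move=> hx; rewrite -sub0r K_sub ?K0. Qed.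

Lemma card_K : #|K| = q.
Proof.
have -> : K = 0 |: L 0.
  apply/setP => x; rewrite in_setU1.
  have [->|x0] := eqVneq x 0; first by rewrite K0.
  by rewrite /= K_L0.
rewrite cardsU1 cyc0 card_cyc // ?Qn // n_eq mulnK //.
by rewrite add1n Hq addn3 /= subn1.
Qed.

Lemma LK1 j x : x \in L j -> exists u, [/\ u \in K, u != 0 & x = w ^+ j * u].
Proof.
move=> xL; have x0 : x != 0 by apply: contraTneq xL => ->; rewrite cyc0.
have [a xa] := logP _ x0.
have wj0 := w_neq0 j.
exists (x / w ^+ j); have u0 : x / w ^+ j != 0 by rewrite mulf_neq0 ?invr_eq0.
split => //; last by rewrite mulrC divfK.
rewrite K_L0 //; have [b hb] := logP _ u0.
have : w ^+ (j + b) = w ^+ a by rewrite exprD -hb -xa mulrC divfK.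
move/eqP; rewrite expw_eq => /eqP E.
move: xL; rewrite hb xa !mem_cyc // ?Qn // mod0n => /eqP E2.
have : (j + b = j + 0 %[mod Q])%N.
  by rewrite addn0 -(modn_dvdm (j+b) Qn) E (modn_dvdm _ Qn).
by move/eqP; rewrite eqn_modDl mod0n.
Qed.

Lemma LK2 j u : u \in K -> u != 0 -> w ^+ j * u \in L j.
Proof.
move=> uK u0; have [b hb] := logP _ u0.
move: uK; rewrite K_L0 // hb !mem_cyc // ?Qn // -exprD mem_cyc // ?Qn // mod0n => /eqP hb0.
by rewrite -modnDmr hb0 addn0.
Qed.

Section Lines.
Variables (j k : nat).
Hypothesis jk : (j %% Q != k %% Q)%N.
Definition Phi (p : F * F) := w ^+ j * p.1 - w ^+ k * p.2.

Lemma Lj_Lk x : x \in L j -> x \in L k -> False.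
Proof. by move=> h1 h2; apply: (@cyc_disj Q Q Q j k x) => //; exact: Qn. Qed.

Lemma phi_inj u v u' v' : u \in K -> v \in K -> u' \in K -> v' \in K ->
  w ^+ j * u - w ^+ k * v = w ^+ j * u' - w ^+ k * v' -> u = u' /\ v = v'.
Proof.
move=> uK vK u'K v'K E.
have E2 : w ^+ j * (u - u') = w ^+ k * (v - v').
  have E2' : w ^+ j * (u - u') - w ^+ k * (v - v') =
    (w ^+ j * u - w ^+ k * v) - (w ^+ j * u' - w ^+ k * v') by ring.
  by rewrite E subrr in E2'; apply/eqP; rewrite -subr_eq0 E2'.
have aK := K_sub _ _ uK u'K; have bK := K_sub _ _ vK v'K.
have [a0|a0] := eqVneq (u - u') 0.
  move: E2; rewrite a0 mulr0 => /esym /eqP; rewrite mulf_eq0 (negbTE (w_neq0 _)) /=.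
  by move/eqP: a0; rewrite !subr_eq0 => /eqP -> /eqP ->.
have b0 : v - v' != 0.
  by apply: contra_neq a0 => b0; move: E2; rewrite b0 mulr0 => /eqP; rewrite mulf_eq0 (negbTE (w_neq0 _)) => /eqP.
exfalso; apply: (@Lj_Lk (w ^+ j * (u - u'))); first exact: LK2.
by rewrite E2; apply: LK2.
Qed.

Lemma Phi_onto z : exists u v, [/\ u \in K, v \in K & z = Phi (u, v)].
Proof.
have : Phi @: setX K K = setT.
  apply/eqP; rewrite eqEcard subsetT cardsT card_in_imset ?cardsX ?card_K.
    by rewrite /= HF mulnn.
  move=> [u v] [u' v']; rewrite !in_setX /= => /andP [uK vK] /andP [u'K v'K] E.
  by case: (phi_inj _ _ _ _ uK vK u'K v'K E) => -> ->.
move/setP/(_ z); rewrite inE => /imsetP [[u v]]; rewrite in_setX /= => /andP [uK vK] ->.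
by exists u, v.
Qed.

Lemma cv_lines z : cv (ind (L j)) (ind (L k)) z = nzf z - ind (L j) z - ind (L k) z.
Proof.
have [u [v [uK vK zE]]] := Phi_onto z.
have memj : (z \in L j) = (u != 0) && (v == 0).
  apply/idP/andP.
  - case/LK1 => u2 [u2K u20 zE'].
    have : Phi (u2, 0) = Phi (u, v) by rewrite -zE zE' /Phi /= mulr0 subr0.
    by case/(phi_inj _ _ _ _ u2K K0 uK vK) => <- <-.
  - by case=> u0 /eqP v0; rewrite zE /Phi /= v0 mulr0 subr0; apply: LK2.
have memk : (z \in L k) = (u == 0) && (v != 0).
  apply/idP/andP.
  - case/LK1 => v2 [v2K v20 zE'].
    have : Phi (0, - v2) = Phi (u, v) by rewrite -zE zE' /Phi /= mulr0 sub0r mulrN opprK.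
    by case/(phi_inj _ _ _ _ K0 (K_opp _ v2K) uK vK) => <- <-; rewrite oppr_eq0.
  - case=> /eqP u0 v0; rewrite zE /Phi /= u0 mulr0 sub0r -mulrN; apply: LK2.
      exact: K_opp.
    by rewrite oppr_eq0.
have memz : (z != 0) = (u != 0) || (v != 0).
  apply/idP/idP.
  - apply: contraLR; rewrite negb_or !negbK => /andP [/eqP u0 /eqP v0].
    by rewrite zE /Phi /= u0 v0 !mulr0 subr0.
  - move=> h; apply/eqP => z0; move: h.
    have : Phi (0, 0) = Phi (u, v) by rewrite -zE z0 /Phi /= !mulr0 subr0.
    by case/(phi_inj _ _ _ _ K0 K0 uK vK) => <- <-; rewrite eqxx.
have term : forall y, ind (L j) (z + y) * ind (L k) y =
    Posz ((u != 0) && (v != 0) && (y == w ^+ k * v)).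
  move=> y; rewrite /ind.
  have -> : Posz (z + y \in L j) * Posz (y \in L k) =
      Posz ((z + y \in L j) && (y \in L k)) by case: (_ \in _); case: (_ \in _).
  congr Posz; congr nat_of_bool.
  apply/andP/idP.
  - case=> /LK1 [u' [u'K u'0 e1]] /LK1 [v' [v'K v'0 e2]].
    have : Phi (u', v') = Phi (u, v) by rewrite -zE /Phi /= -e1 -e2 addrK.
    by case/(phi_inj _ _ _ _ u'K v'K uK vK) => eu ev; rewrite -eu -ev u'0 v'0 e2 eqxx.
  - case/andP => /andP [u0 v0] /eqP ->; split; last exact: LK2.
    by rewrite zE /Phi /= subrK; apply: LK2.
rewrite /cv (eq_bigr _ (fun y _ => term y)).
have -> : \sum_(y : F) Posz ((u != 0) && (v != 0) && (y == w ^+ k * v)) =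
    Posz ((u != 0) && (v != 0)).
  case c: ((u != 0) && (v != 0)) => /=.
    rewrite (bigD1 (w ^+ k * v)) //= eqxx big1 ?addr0 //.
    by move=> y /negbTE ->.
  by rewrite big1.
rewrite /nzf /ind memz memj memk.
by case: (u == 0); case: (v == 0).
Qed.

End Lines.

Lemma Qe : (q.+1 = 8 * m + 4)%N. Proof. by rewrite Hq; lia. Qed.
Lemma eight_n : (8 %| n)%N.
Proof. rewrite n_nh /nh; apply/dvdnP; exists ((4 * m + 1) * (2 * m + 1))%N; lia. Qed.
Lemma four_Q : (4 %| Q)%N.
Proof. by rewrite Qe; apply/dvdnP; exists (2 * m + 1)%N; lia. Qed.
Lemma nh8 : (nh %% 8 = 4)%N. Proof. rewrite /nh; lia. Qed.

Lemma l_sym j t : ind (L j) (- t) = ind (L j) t.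
Proof.
have [->|t0] := eqVneq t 0; first by rewrite oppr0.
have [a ->] := logP _ t0; rewrite neg_w /ind !mem_cyc ?Qn //.
suff -> : ((a + nh) %% Q = a %% Q)%N by [].
rewrite -modnDmr (_ : nh %% Q = 0)%N ?addn0 //.
by apply/eqP; change (Q %| nh)%N; rewrite Qe /nh dvdn_mull.
Qed.

Lemma card_L j : #|L j| = (q - 1)%N.
Proof. by rewrite card_cyc // ?Qn // n_eq mulnK. Qed.

Lemma ind8 b i : ind (cyc w 8 i) (w ^+ b) = Posz (b %% 8 == i %% 8)%N.
Proof. by rewrite /ind mem_cyc // eight_n. Qed.

Definition bf (s : nat) (x : F) : int := \sum_(i < m) ind (L (s + 4 * i)) x.
Definition df (s : nat) (x : F) : int := \sum_(i < (2 * m).+1) ind (L (s %% 4 + 4 * i)) x.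

Lemma bf_sym s t : bf s (- t) = bf s t.
Proof. by apply: eq_bigr => i _; rewrite l_sym. Qed.

Lemma sum_bf s : \sum_(y : F) bf s y = m%:Z * (q - 1)%:Z.
Proof.
rewrite /bf exchange_big /= (eq_bigr (fun _ => (q - 1)%:Z)); last first.
  by move=> i _; rewrite sum_ind card_L.
by rewrite sumr_const card_ord -mulr_natr natz mulrC.
Qed.

Lemma df_w r a : df r (w ^+ a) = Posz (a %% 4 == r %% 4)%N.
Proof.
rewrite /df (eq_bigr (fun i : 'I_(2 * m).+1 => Posz (a %% Q == r %% 4 + 4 * i)%N)); last first.
  move=> i _; rewrite /ind mem_cyc ?Qn // [X in _ == X]modn_small //.
  have := ltn_ord i; have := ltn_pmod r (isT : (0 < 4)%N); rewrite Hq; lia.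
rewrite -(big_morph Posz PoszD (erefl _)); congr Posz.
rewrite -(modn_dvdm a four_Q); apply: arith_d; last by rewrite ltn_pmod.
by have := ltn_pmod a (ltn0Sn q); rewrite Qe; lia.
Qed.

Lemma df0 r : df r 0 = 0.
Proof. by rewrite /df big1 // => i _; rewrite /ind (negbTE (cyc0 _ _)). Qed.

Lemma df_sum4 y z : df (y + 2) z + df y z + df (y + 3) z + df (y + 1) z = nzf z.
Proof.
have [->|z0] := eqVneq z 0; first by rewrite !df0 /nzf eqxx.
have [a ->] := logP _ z0; rewrite !df_w /nzf w_neq0; lia.
Qed.

Lemma a_sym (I : {set 'I_8}) (y : nat) s r t :
  (forall a s, (\sum_(i in I) (a %% 8 == (i + s) %% 8) + \sum_(i in I) ((a + 4) %% 8 == (i + s) %% 8)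
   + (a %% 4 == (y + 2 + s) %% 4))%N = 1%N) ->
  (r %% 4 = (y + 2 + s) %% 4)%N ->
  \sum_(i in I) ind (cyc w 8 (i + s)) t + \sum_(i in I) ind (cyc w 8 (i + s)) (- t)
  = nzf t - df r t.
Proof.
move=> HI hr.
have [->|t0] := eqVneq t 0.
  rewrite oppr0 df0 /nzf eqxx /= big1 ?add0r ?subr0 // => i _.
  by rewrite /ind (negbTE (cyc0 _ _)).
have [a ->] := logP _ t0; rewrite neg_w df_w /nzf w_neq0.
rewrite (eq_bigr (fun i : 'I_8 => Posz (a %% 8 == (i + s) %% 8)%N)); last by move=> i _; rewrite ind8.
rewrite [X in _ + X = _](eq_bigr (fun i : 'I_8 => Posz ((a + 4) %% 8 == (i + s) %% 8)%N)); last first.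
  by move=> i _; rewrite ind8 -modnDmr nh8.
rewrite -!(big_morph Posz PoszD (erefl _)).
have := HI a s; rewrite -hr.
move: (\sum_(i in I) (a == i + s %[mod 8]))%N (\sum_(i in I) (a + 4 == i + s %[mod 8]))%N.
by case: (a == r %[mod 4]) => A B /= h; lia.
Qed.

Lemma ind_E (I : {set 'I_8}) (g : 'I_8 -> nat) (f : nat -> nat) x :
  (forall i j, i \in I -> j \in I -> i != j -> g i %% 8 != g j %% 8)%N ->
  (forall i k, i \in I -> (g i %% 4 != f k %% 4))%N ->
  (forall k k', (k < m)%N -> (k' < m)%N -> k != k' -> (f k %% Q != f k' %% Q))%N ->
  ind ((\bigcup_(i in I) cyc w 8 (g i)) :|: \bigcup_(k < m) L (f k)) x =
  \sum_(i in I) ind (cyc w 8 (g i)) x + \sum_(k < m) ind (L (f k)) x.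
Proof.
move=> h1 h2 h3.
rewrite ind_U; last first.
  move=> /bigcupP [i iI xi] /bigcupP [k _ xk].
  exact: (@cyc_disj 8 Q 4 (g i) (f k) x _ eight_n _ Qn _ four_Q (h2 i k iI)).
rewrite !ind_bigcup //.
  move=> k k' _ _ kk xk xk'.
  apply: (@cyc_disj Q Q Q (f k) (f k') x _ Qn _ Qn (dvdnn _) (dvdnn _) _ xk xk') => //.
  by apply: h3 => //.
move=> i j iI jI ij xi xj.
exact: (@cyc_disj 8 8 8 (g i) (g j) x _ eight_n _ eight_n (dvdnn _) (dvdnn _) (h1 i j iI jI ij) xi xj).
Qed.

Lemma cv_lsum p r (s : 'I_p -> nat) (t : 'I_r -> nat) z :
  (forall i k, s i %% Q != t k %% Q)%N ->
  cv (fun x => \sum_(i < p) ind (L (s i)) x) (fun x => \sum_(k < r) ind (L (t k)) x) z =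
  p%:Z * r%:Z * nzf z - r%:Z * \sum_(i < p) ind (L (s i)) z - p%:Z * \sum_(k < r) ind (L (t k)) z.
Proof.
move=> H; rewrite cv_suml.
under eq_bigr => i _ do rewrite cv_sumr.
under eq_bigr => i _ do under eq_bigr => k _ do rewrite (cv_lines _ _ (H i k)).
under eq_bigr => i _ do rewrite !sumrB sum_ord_const [X in _ - X - _]sum_ord_const.
rewrite !sumrB !sum_ord_const -mulr_sumr.
move: (nzf z) (\sum_(i < p) ind (L (s i)) z) (\sum_(k < r) ind (L (t k)) z) => A B C.
by rewrite mulrA.
Qed.

Lemma mod4_neq s s' (i k : nat) : (s %% 4 != s' %% 4)%N ->
  ((s %% 4 + 4 * i) %% Q != (s' + 4 * k) %% Q)%N /\ ((s + 4 * i) %% Q != (s' + 4 * k) %% Q)%N.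
Proof.
move=> H; split; apply/negP => /eqP e; have := congr1 (modn^~ 4%N) e;
  rewrite /= !(modn_dvdm _ four_Q) => e2; move/negP: H; apply; apply/eqP; lia.
Qed.

Lemma cv_db s s' z : (s %% 4 != s' %% 4)%N ->
  cv (df s) (bf s') z = ((2 * m).+1)%:Z * m%:Z * nzf z - m%:Z * df s z - ((2 * m).+1)%:Z * bf s' z.
Proof.
move=> H; rewrite /df /bf (@cv_lsum _ _ (fun i : 'I_(2 * m).+1 => (s %% 4 + 4 * i)%N) (fun k : 'I_m => (s' + 4 * k)%N)) //.
by move=> i k; case: (mod4_neq _ _ i k H).
Qed.

Lemma cv_bb s s' z : (s %% 4 != s' %% 4)%N ->
  cv (bf s) (bf s') z = m%:Z * m%:Z * nzf z - m%:Z * bf s z - m%:Z * bf s' z.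
Proof.
move=> H; rewrite /bf (@cv_lsum _ _ (fun i : 'I_m => (s + 4 * i)%N) (fun k : 'I_m => (s' + 4 * k)%N)) //.
by move=> i k; case: (mod4_neq _ _ i k H).
Qed.

Lemma pair_rest s s' (a a' : F -> int) z : (s %% 4 != s' %% 4)%N ->
  (forall t, a t + a (- t) = nzf t - df s t) -> (forall t, a' t + a' (- t) = nzf t - df s' t) ->
  cv (fun x => a x + bf s x) (fun x => a' x + bf s' x) z
  + cv (fun x => a' x + bf s' x) (fun x => a x + bf s x) z
  = cv a a' z + cv a' a z + 2%:Z * m%:Z * (q - 1)%:Z - 2%:Z * m%:Z * (m%:Z + 1) * nzf z
    + m%:Z * (df s z + df s' z).
Proof.
move=> H ha ha'.
rewrite !cvDl !cvDr.
rewrite (cv_swap _ a' (bf s) z (bf_sym s)) (cv_swap _ a (bf s') z (bf_sym s')).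
have X1 : cv a (bf s') z = cv nzf (bf s') z - cv (df s) (bf s') z - cv (fun x => a (- x)) (bf s') z.
  apply/eqP; rewrite -subr_eq0 -!cvBl; apply/eqP; rewrite /cv big1 // => y _.
  by rewrite (_ : _ - _ = 0) ?mul0r //; move: (ha (z + y)); lia.
have X2 : cv a' (bf s) z = cv nzf (bf s) z - cv (df s') (bf s) z - cv (fun x => a' (- x)) (bf s) z.
  apply/eqP; rewrite -subr_eq0 -!cvBl; apply/eqP; rewrite /cv big1 // => y _.
  by rewrite (_ : _ - _ = 0) ?mul0r //; move: (ha' (z + y)); lia.
have H' : (s' %% 4 != s %% 4)%N by rewrite eq_sym.
rewrite X1 X2 !cv_nz !sum_bf !bf_sym (cv_db _ _ _ H) (cv_db _ _ _ H') (cv_bb _ _ _ H) (cv_bb _ _ _ H').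
rewrite (_ : Posz (2 * m).+1 = 2%:Z * m%:Z + 1); last by rewrite -addn1 PoszD PoszM.
move: (cv a a' z) (cv a' a z) (cv (fun x => a (- x)) (bf s') z) (cv (fun x => a' (- x)) (bf s) z)
  (nzf z) (df s z) (df s' z) (bf s z) (bf s' z) (Posz m) (Posz (q - 1)) => ? ? ? ? ? ? ? ? ? ? ?.
ring.
Qed.
Lemma lines_distinct c (k k' : nat) : (k < m)%N -> (k' < m)%N -> k != k' ->
  ((c + 4 * k) %% Q != (c + 4 * k') %% Q)%N.
Proof.
move=> hk hk' kk; rewrite eqn_modDl !modn_small; [| rewrite Qe; lia | rewrite Qe; lia].
by apply: contra kk => /eqP e; apply/eqP; lia.
Qed.

Lemma E_dec (I : {set 'I_8}) (g : 'I_8 -> nat) (f : nat -> nat) (c : nat) x :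
  (forall i j, i \in I -> j \in I -> i != j -> g i %% 8 != g j %% 8)%N ->
  (forall i, i \in I -> g i %% 4 != c %% 4)%N ->
  (forall k, f k %% Q = (c + 4 * k) %% Q)%N ->
  ind ((\bigcup_(i in I) cyc w 8 (g i)) :|: \bigcup_(k < m) L (f k)) x =
  \sum_(i in I) ind (cyc w 8 (g i)) x + bf c x.
Proof.
move=> h1 h2 h3; rewrite ind_E //.
- congr (_ + _); apply: eq_bigr => k _; rewrite (@cyc_eq Q (f k) (c + 4 * k)) //; exact: Qn.
- move=> i k iI; rewrite -(modn_dvdm (f k) four_Q) h3 (modn_dvdm _ four_Q).
  have := h2 i iI; move: (g i) => gi; lia.
- by move=> k k' hk hk' kk; rewrite !h3; apply: lines_distinct.
Qed.

Lemma AA (I : {set 'I_8}) s s' z :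
  cv (fun x => \sum_(i in I) ind (cyc w 8 (i + s)) x) (fun x => \sum_(i in I) ind (cyc w 8 (i + s')) x) z
  = \sum_(i in I) \sum_(j in I) grmulinv (cyc w 8 (i + s)) (cyc w 8 (j + s')) z.
Proof.
rewrite cv_suml; apply: eq_bigr => i _; rewrite cv_sumr; apply: eq_bigr => j _.
by rewrite grmulinvE.
Qed.

Lemma main_in (I : {set 'I_8}) (y : 'I_8) :
  #|I| = 3%N ->
  (forall x : 'I_8, x \in I -> (inord ((x + 4) %% 8) : 'I_8) \notin I) ->
  y \in I -> (forall x : 'I_8, x \in I -> x != y -> odd x != odd y) ->
  forall z : F,
    grmulinv (E0 w q m y I) (E1 w q m y I) z + grmulinv (E1 w q m y I) (E0 w q m y I) z
    + grmulinv (E2 w q m y I) (E3 w q m y I) z + grmulinv (E3 w q m y I) (E2 w q m y I) z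
    = \sum_(h < 2) \sum_(i in I) \sum_(j in I)
        (grmulinv (cyc w 8 (i + h)) (cyc w 8 (j + 2 + h)) z
         + grmulinv (cyc w 8 (i + 2 + h)) (cyc w 8 (j + h)) z)
      + (8 * m * (4 * m + 1) * (z == 0%R :> F))%N%:Z
      + (m * (28 * m + 5) * (z != 0%R :> F))%N%:Z.
Proof.
move=> cI H4 yI Hpar z.
have HI := @Ifact2 I y cI H4 yI Hpar.
have HI3 := @Ifact3 I y cI H4 yI Hpar.
pose A s x := \sum_(i in I) ind (cyc w 8 (i + s)) x.
have gdist : forall s i j, i \in I -> j \in I -> i != j -> ((i + s) %% 8 != (j + s) %% 8)%N.
  move=> s i j _ _; rewrite -val_eqE /=; have := ltn_ord i; have := ltn_ord j.
  move: (nat_of_ord i) (nat_of_ord j) => a b ha hb ab; apply/negP => /eqP e.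
  by move/negP: ab; apply; apply/eqP; lia.
have cls : forall s c, ((y + 2 + s) %% 4 = c %% 4)%N -> forall i, i \in I -> ((i + s) %% 4 != c %% 4)%N.
  move=> s c hc i iI; have := HI3 i iI; rewrite -hc; move: (nat_of_ord i) (nat_of_ord y) => a b; lia.
have e0 : forall x, ind (E0 w q m y I) x = A 0%N x + bf (y + 2) x.
  move=> x; rewrite /E0 (@E_dec I (fun i => nat_of_ord i) (fun k => (y + 2 + 4 * k) %% Q)%N (y + 2) x).
  - by rewrite /A; congr (_ + _); apply: eq_bigr => i _; rewrite addn0.
  - by move=> i j iI jI ij; have := gdist 0%N i j iI jI ij; rewrite !addn0.
  - by move=> i iI; have := cls 0%N (y + 2)%N (congr1 (modn^~ 4%N) (addn0 _)) i iI; rewrite addn0.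
  - by move=> k; rewrite modn_mod.
have e1 : forall x, ind (E1 w q m y I) x = A 2%N x + bf y x.
  move=> x; rewrite /E1 (@E_dec I (fun i => (i + 2)%N) (fun k => (y + 4 * k) %% Q)%N y x) //.
  - by move=> i j iI jI ij; apply: gdist.
  - by apply: cls; lia.
  - by move=> k; rewrite modn_mod.
have e2 : forall x, ind (E2 w q m y I) x = A 1%N x + bf (y + 3) x.
  move=> x; rewrite /E2 (@E_dec I (fun i => (i + 1)%N) (fun k => (y + 2 + 4 * k) %% Q + 1)%N (y + 3) x) //.
  - by move=> i j iI jI ij; apply: gdist.
  - by apply: cls; lia.
  - by move=> k; rewrite modnDml; congr modn; lia.
have e3 : forall x, ind (E3 w q m y I) x = A 3%N x + bf (y + 1) x.
  move=> x; rewrite /E3 (@E_dec I (fun i => (i + 3)%N) (fun k => (y + 4 * k) %% Q + 1)%N (y + 1) x) //.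
  - by move=> i j iI jI ij; apply: gdist.
  - by apply: cls; lia.
  - by move=> k; rewrite modnDml; congr modn; lia.
have s0 : forall t, A 0%N t + A 0%N (- t) = nzf t - df (y + 2) t.
  by move=> t; apply: (a_sym I y 0 (y + 2) t HI); rewrite addn0.
have s1 : forall t, A 2%N t + A 2%N (- t) = nzf t - df y t.
  by move=> t; apply: (a_sym I y 2 y t HI); lia.
have s2 : forall t, A 1%N t + A 1%N (- t) = nzf t - df (y + 3) t.
  by move=> t; apply: (a_sym I y 1 (y + 3) t HI); lia.
have s3 : forall t, A 3%N t + A 3%N (- t) = nzf t - df (y + 1) t.
  by move=> t; apply: (a_sym I y 3 (y + 1) t HI); lia.
have H01 : ((y + 2) %% 4 != y %% 4)%N by move: (nat_of_ord y) => b; lia.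
have H23 : ((y + 3) %% 4 != (y + 1) %% 4)%N by move: (nat_of_ord y) => b; lia.
have P01 := pair_rest (y + 2) y (A 0%N) (A 2%N) z H01 s0 s1.
have P23 := pair_rest (y + 3) (y + 1) (A 1%N) (A 3%N) z H23 s2 s3.
rewrite !grmulinvE.
rewrite (cv_ext _ _ _ _ _ z e0 e1) (cv_ext _ _ _ _ _ z e1 e0) (cv_ext _ _ _ _ _ z e2 e3) (cv_ext _ _ _ _ _ z e3 e2).
rewrite -[X in X = _]addrA P01 P23 /A !AA.
rewrite big_ord_recr big_ord_recr big_ord0 /= add0r.
pose G a b := grmulinv (cyc w 8 a) (cyc w 8 b) z.
have R1 : \sum_(i in I) \sum_(j in I) (G (i + 0)%N (j + 2 + 0)%N + G (i + 2 + 0)%N (j + 0)%N)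
  = \sum_(i in I) \sum_(j in I) G (i + 0)%N (j + 2)%N + \sum_(i in I) \sum_(j in I) G (i + 2)%N (j + 0)%N.
  rewrite -big_split; apply: eq_bigr => i _; rewrite -big_split; apply: eq_bigr => j _.
  by rewrite /G !addn0.
have R2 : \sum_(i in I) \sum_(j in I) (G (i + 1)%N (j + 2 + 1)%N + G (i + 2 + 1)%N (j + 1)%N)
  = \sum_(i in I) \sum_(j in I) G (i + 1)%N (j + 3)%N + \sum_(i in I) \sum_(j in I) G (i + 3)%N (j + 1)%N.
  rewrite -big_split; apply: eq_bigr => i _; rewrite -big_split; apply: eq_bigr => j _.
  by rewrite /G -!addnA.
rewrite /G in R1 R2; rewrite R1 R2.
have D := df_sum4 y z.
have D' : m%:Z * (df (y + 2) z + df y z) + m%:Z * (df (y + 3) z + df (y + 1) z) = m%:Z * nzf z.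
  by rewrite -D; ring.
move: D'; rewrite /nzf; case: (z == 0) => /= D'; rewrite Hq; lia.
Qed.
End S.


Theorem lemma3p3 (F : finFieldType) (q m : nat) (w : F) (I : {set 'I_8}) (y : 'I_8) :
  (exists p k : nat, prime p /\ (0 < k)%N /\ q = (p ^ k)%N) ->
  (1 <= m)%N -> q = (8 * m + 3)%N -> #|F| = (q ^ 2)%N ->
  (#|F|.-1).-primitive_root w ->
  #|I| = 3%N ->
  (forall x : 'I_8, x \in I -> (inord ((x + 4) %% 8) : 'I_8) \notin I) ->
  y \in I -> (forall x : 'I_8, x \in I -> x != y -> odd x != odd y) ->
  forall z : F,
    grmulinv (E0 w q m y I) (E1 w q m y I) z + grmulinv (E1 w q m y I) (E0 w q m y I) z
    + grmulinv (E2 w q m y I) (E3 w q m y I) z + grmulinv (E3 w q m y I) (E2 w q m y I) z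
    = \sum_(h < 2) \sum_(i in I) \sum_(j in I)
        (grmulinv (cyc w 8 (i + h)) (cyc w 8 (j + 2 + h)) z
         + grmulinv (cyc w 8 (i + 2 + h)) (cyc w 8 (j + h)) z)
      + (8 * m * (4 * m + 1) * (z == 0%R :> F))%N%:Z
      + (m * (28 * m + 5) * (z != 0%R :> F))%N%:Z.
Proof.
move=> [p [k [pp [k0 qe]]]] Hm Hq HF Hw cI H4 yI Hpar z.
have Hc : [pchar F].-nat q.
  have pc : p \in [pchar F].
    by apply: (@card_finPcharP F p (k * 2)%N) => //; rewrite HF qe -expnM.
  by rewrite qe pnatX (pnatE _ pp) pc.
exact: (@main_in F w q m Hm Hq HF Hw Hc I y cI H4 yI Hpar z).
Qed.
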